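(* Let $a,b,c$ be positive integers and $\vec k=(a,b,c)$. Every $\pi\in\mathcal D_{(a,b,c)}$ can be written uniquely as $$\pi=S^{a}W^{\ell_1}S^{b}W^{\ell_2}S^{c}W^{a+b+c-\ell_1-\ell_2}$$ with integers $\ell_1,\ell_2$ satisfying $0\le\ell_1\le a$, $0\le\ell_2$, $\ell_1+\ell_2\le a+b$ (here $W^{n}$ denotes $n$ consecutive letters $W$). Define $\theta$ on $\mathcal D_{(a,b,c)}$ by $$\theta(\pi)=\begin{cases} S^{a}W^{a-\ell_1}S^{b}W^{b-\ell_2}S^{c}W^{c+\ell_1+\ell_2}, & \text{if } \ell_2\le b,\\ S^{a}W^{a+b-\ell_1-\ell_2}S^{b}W^{\ell_2}S^{c}W^{c+\ell_1}, & \text{otherwise.}\end{cases}$$ Then $\theta$ is an involution on $\mathcal D_{(a,b,c)}$ satisfying $\mathrm{area}(\pi)=\mathrm{depth}(\theta(\pi))$ and $\mathrm{depth}(\pi)=\mathrm{area}(\theta(\pi))$ for all $\pi\in\mathcal D_{(a,b,c)}$.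
   Context: For $\vec k=(k_1,\dots,k_\ell)$ put $|\vec k|=\sum k_i$, $N=|\vec k|+\ell$. A $\vec k$-Dyck path is a word $\pi=\pi_1\cdots\pi_N$ containing the letters $S^{k_1},\dots,S^{k_\ell}$ exactly once each and in this order, together with $|\vec k|$ letters $W$, such that all starting ranks are nonnegative, where $r_1=0$, $r_{i+1}=r_i+k_j$ if $\pi_i=S^{k_j}$ and $r_{i+1}=r_i-1$ if $\pi_i=W$. $\mathcal D_{\vec k}$ is the set of such paths. $\mathrm{area}(\pi)=\sum_j a_j$ where $a_j$ is the starting rank of $S^{k_j}$. Filling algorithm $\eta_*$: in a tableau of $\ell$ top-justified columns, column $i$ having $k_i+1$ cells, place $1$ at the top of column 1; for $i=2,\dots,N$, call an entry active if it is currently the bottom entry of a column $i'$ not yet containing $k_{i'}+1$ entries; if $\pi_i=W$ place $i$ immediately below the largest active entry, otherwise place $i$ at the top of the first empty column. Ranking algorithm $\gamma_*$: column 1 gets ranks $0,\dots,k_1$ top to bottom; for $i\ge2$, if the top entry of column $i$ of $\eta_*(\pi)$ is $A+1$ and $A$ has rank $\alpha$, column $i$ gets ranks $\alpha,\dots,\alpha+k_i$ top to bottom. $\mathrm{depth}(\pi)$ is the sum of the first-row ranks. *)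

(* Defs.v *)
From mathcomp Require Import all_boot all_order all_algebra.
Set Implicit Arguments.
Unset Strict Implicit.
Unset Printing Implicit Defensive.
Import GRing.Theory Num.Theory.

(* Letters of a k-Dyck path: [S j] stands for the letter S^{k_j}
   (columns/letters are indexed from 0), [W] for the west step. *)
Definition letter := option nat.
Definition S (j : nat) : letter := Some j.
Definition W : letter := None.

Definition sletters (pi : seq letter) : seq nat := pmap id pi.

Definition rstep (k : seq nat) (r : int) (l : letter) : int :=
  match l with
  | Some j => (r + (nth 0 k j)%:Z)%R
  | None => (r - 1)%R
  end.

Definition start_ranks (k : seq nat) (pi : seq letter) : seq int :=
  take (size pi) (0%R :: scanl (rstep k) 0%R pi).

Definition is_kDyck (k : seq nat) (pi : seq letter) : bool :=
  [&& sletters pi == iota 0 (size k),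
      count (fun l => l == W) pi == sumn k &
      all (fun r : int => (0 <= r)%R) (start_ranks k pi)].

Definition area (k : seq nat) (pi : seq letter) : int :=
  (\sum_(p <- zip (start_ranks k pi) pi | p.2 != W) p.1)%R.

(* A tableau is a list of columns (0-indexed); each column lists its
   entries from top to bottom. Column i has room for k_i + 1 entries. *)
Definition tableau := seq (seq nat).

Definition column (T : tableau) (c : nat) : seq nat := nth [::] T c.
Definition bottom (T : tableau) (c : nat) : nat := last 0 (column T c).

Definition active_cols (k : seq nat) (T : tableau) : seq nat :=
  [seq c <- iota 0 (size T) | 0 < size (column T c) < (nth 0 k c).+1].

Definition max_active_col (k : seq nat) (T : tableau) : nat :=
  let act := active_cols k T in
  foldl (fun best c => if bottom T best < bottom T c then c else best)
        (head 0 act) act.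

Definition fill_step (k : seq nat) (T : tableau) (il : nat * letter) : tableau :=
  let: (i, l) := il in
  if i == 1 then set_nth [::] T 0 [:: 1]
  else match l with
       | None => let c := max_active_col k T in
                 set_nth [::] T c (rcons (column T c) i)
       | Some _ => let c := find (fun col => col == [::]) T in
                   set_nth [::] T c [:: i]
       end.

Definition fill (k : seq nat) (pi : seq letter) : tableau :=
  foldl (fill_step k) (nseq (size k) [::]) (zip (iota 1 (size pi)) pi).

Definition col_of (T : tableau) (e : nat) : nat := find (fun col => e \in col) T.
Definition pos_of (T : tableau) (e : nat) : nat := index e (column T (col_of T e)).

(* ranks of the top (first-row) entries of the columns, column by column:
   column 0 starts at rank 0; for column i >= 1 with top entry A+1, the top
   rank is the rank of A, i.e. (top rank of A's column) + (row of A). *)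
Definition top_ranks (T : tableau) : seq nat :=
  foldl (fun acc i =>
           rcons acc
             (if i == 0 then 0
              else let A := (head 0 (column T i)).-1 in
                   nth 0 acc (col_of T A) + pos_of T A))
        [::] (iota 0 (size T)).

Definition depth (k : seq nat) (pi : seq letter) : nat :=
  sumn (top_ranks (fill k pi)).

Definition path3 (l1 l2 l3 : nat) : seq letter :=
  [:: S 0] ++ nseq l1 W ++ [:: S 1] ++ nseq l2 W ++ [:: S 2] ++ nseq l3 W.

(* l1, l2 read off from pi = S^a W^l1 S^b W^l2 S^c W^... *)
Definition ell1 (pi : seq letter) : nat := (index (S 1) pi).-1.
Definition ell2 (pi : seq letter) : nat := (index (S 2) pi - index (S 1) pi).-1.

Definition theta (a b c : nat) (pi : seq letter) : seq letter :=
  let l1 := ell1 pi in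
  let l2 := ell2 pi in
  if l2 <= b then path3 (a - l1) (b - l2) (c + l1 + l2)
  else path3 (a + b - l1 - l2) l2 (c + l1).

(* Main.v *)
Require Import Defs.
From mathcomp Require Import all_boot all_order all_algebra zify.
Set Implicit Arguments. Unset Strict Implicit.

Definition F (k : seq nat) (T : tableau) (s : nat) (p : seq letter) :=
  foldl (fill_step k) T (zip (iota s (size p)) p).

Lemma F_cat k T s x y : F k T s (x ++ y) = F k (F k T s x) (s + size x) y.
Proof. by rewrite /F size_cat iotaD zip_cat ?size_iota // foldl_cat. Qed.

Lemma F_cons k T s l p : F k T s (l :: p) = F k (fill_step k T (s, l)) s.+1 p.
Proof. by []. Qed.

Lemma iota_rcons m n : iota m n.+1 = rcons (iota m n) (m + n).
Proof. by rewrite -addn1 iotaD cats1. Qed.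

Lemma last_iota m n : last 0 (iota m n.+1) = m + n.
Proof. by rewrite iota_rcons last_rcons. Qed.

Section P.
Variables a b c : nat.
Let k := [:: a; b; c].

Lemma P1 m n s : s = m.+2 -> m + n <= a ->
  F k [:: iota 1 m.+1; [::]; [::]] s (nseq n W) = [:: iota 1 (m+n).+1; [::]; [::]].
Proof.
elim: n m s => [|n IH] m s Hs Hmn; first by rewrite addn0.
rewrite /= F_cons.
have -> : fill_step k [:: iota 1 m.+1; [::]; [::]] (s, W) = [:: iota 1 m.+2; [::]; [::]].
  rewrite /fill_step Hs /= /max_active_col /active_cols /column /= size_iota.
  have -> : m.+1 < a.+1 by lia.
  by rewrite /= ltnn /= -[m.+2]/(2+m) -iota_rcons.
rewrite (IH m.+1) ?Hs //; first by rewrite addSnnS.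
lia.
Qed.
End P.

Lemma stepW1 k x y z i : i != 1 -> 0 < size x -> 0 < size y < (nth 0 k 1).+1 ->
  size z = 0 -> last 0 x < last 0 y ->
  fill_step k [:: x; y; z] (i, W) = [:: x; rcons y i; z].
Proof.
move=> /negbTE Hi Hx /andP[Hy0 Hy1] Hz Hxy.
rewrite /fill_step Hi /max_active_col /active_cols /column /bottom /= Hy0 Hy1 Hz Hx /=.
by case: ifP => _ /=; rewrite ?ltnn /column /= ?Hxy.
Qed.

Lemma stepW0 k x y z i : i != 1 -> 0 < size x < (nth 0 k 0).+1 ->
  ~~ (0 < size y < (nth 0 k 1).+1) -> size z = 0 ->
  fill_step k [:: x; y; z] (i, W) = [:: rcons x i; y; z].
Proof.
move=> /negbTE Hi Hx /negbTE Hy Hz.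
by rewrite /fill_step Hi /max_active_col /active_cols /column /bottom /= Hy Hz Hx /= ltnn.
Qed.
Section P2.
Variables a b c l1 : nat.
Let k := [:: a; b; c].
Hypothesis Hl1 : l1 <= a.

Lemma P2a q n s : s = l1 + 2 + q.+1 -> q + n <= b ->
  F k [:: iota 1 l1.+1; iota (l1+2) q.+1; [::]] s (nseq n W) =
  [:: iota 1 l1.+1; iota (l1+2) (q+n).+1; [::]].
Proof.
elim: n q s => [|n IH] q s Hs Hqn; first by rewrite addn0.
rewrite -[nseq n.+1 W]/(W :: nseq n W) F_cons stepW1 ?size_iota ?last_iota //; last by lia.
- rewrite Hs -iota_rcons (IH q.+1) ?addSnnS //; lia.
- rewrite Hs; lia.
- rewrite /=; lia.
Qed.

Lemma P2b p n s : s = l1 + b + 3 + p -> l1 + p + n <= a ->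
  F k [:: iota 1 l1.+1 ++ iota (l1+b+3) p; iota (l1+2) b.+1; [::]] s (nseq n W) =
  [:: iota 1 l1.+1 ++ iota (l1+b+3) (p+n); iota (l1+2) b.+1; [::]].
Proof.
elim: n p s => [|n IH] p s Hs Hpn; first by rewrite addn0.
rewrite -[nseq n.+1 W]/(W :: nseq n W) F_cons stepW0 ?size_iota ?size_cat ?size_iota //.
- rewrite rcons_cat Hs -iota_rcons (IH p.+1) ?addSnnS //; lia.
- rewrite Hs; lia.
- rewrite /=; lia.
- rewrite /=; lia.
Qed.
End P2.

Definition ext n (T T' : tableau) :=
  size T' = size T /\ forall c, exists2 s, column T' c = column T c ++ s & all (leq n) s.

Lemma ext_refl n T : ext n T T.
Proof. by split=> // c; exists [::]; rewrite ?cats0. Qed.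

Lemma ext_trans n T1 T2 T3 : ext n T1 T2 -> ext n T2 T3 -> ext n T1 T3.
Proof.
move=> [H1 H2] [H3 H4]; split; first by rewrite H3.
move=> c; have [s1 E1 A1] := H2 c; have [s2 E2 A2] := H4 c.
by exists (s1 ++ s2); rewrite ?E2 ?E1 ?catA // all_cat A1 A2.
Qed.

Lemma foldl_in (f : nat -> nat -> nat) (P : pred nat) x0 s :
  (forall x y, f x y = x \/ f x y = y) -> P x0 -> all P s -> P (foldl f x0 s).
Proof.
move=> Hf; elim: s x0 => [|y s IH] x0 //= Hx /andP[Hy Hs].
by apply: IH => //; case: (Hf x0 y) => ->.
Qed.

Lemma mac_lt k T : 0 < size T -> max_active_col k T < size T.
Proof.
move=> HT; rewrite /max_active_col.
have Hall : all (fun c => c < size T) (active_cols k T).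
  by apply/allP => x; rewrite mem_filter mem_iota => /andP[_ /andP[_]].
apply: (foldl_in (P := fun c => c < size T)) => //.
  by move=> x y; case: ifP; [right|left].
case E: (active_cols k T) => [|y s] //=.
by rewrite E in Hall; case/andP: Hall.
Qed.

Lemma ext_stepW k n T i : 0 < size T -> n <= i -> i != 1 -> ext n T (fill_step k T (i, W)).
Proof.
move=> HT Hn /negbTE Hi; rewrite /fill_step Hi.
have Hc := mac_lt k HT.
set m := max_active_col k T in Hc *.
split; first by rewrite size_set_nth; apply/maxn_idPr.
move=> c; rewrite /column nth_set_nth /=.
case: eqP => [->|_]; last by exists [::]; rewrite ?cats0.
by exists [:: i]; rewrite ?cats1 //= Hn.
Qed.

Lemma ext_W k n T s m : 0 < size T -> n <= s -> 1 < s -> ext n T (F k T s (nseq m W)).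
Proof.
elim: m T s => [|m IH] T s HT Hn H1; first exact: ext_refl.
rewrite -[nseq m.+1 W]/(W :: nseq m W) F_cons.
have E1 : ext n T (fill_step k T (s, W)).
  by apply: ext_stepW => //; rewrite neq_ltn H1 orbT.
apply: (ext_trans E1); apply: IH; last by lia.
  by case: E1 => ->.
lia.
Qed.

Lemma ext_col_of n T T' A : ext n T T' -> A < n -> col_of T' A = col_of T A.
Proof.
move=> [Hs Hc] HA; rewrite /col_of.
rewrite -(find_map (fun col => A \in col) id) -(find_map (fun col => A \in col) id).
congr find; apply: (@eq_from_nth _ false); rewrite ?size_map ?Hs // => i Hi.
rewrite !(nth_map [::]) ?Hs //.
have [s E Al] := Hc i; move: E; rewrite /column => ->.
rewrite mem_cat; case: (A \in s) /idP; rewrite ?orbF //.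
by move/(allP Al); lia.
Qed.

Lemma ext_pos_of n T T' A : ext n T T' -> A < n -> A \in column T (col_of T A) ->
  pos_of T' A = pos_of T A.
Proof.
move=> HE HA Hin; rewrite /pos_of (ext_col_of HE HA).
case: HE => _ Hc; have [s -> _] := Hc (col_of T A).
by rewrite index_cat Hin.
Qed.

Lemma ext_head n T T' c : ext n T T' -> column T c != [::] ->
  head 0 (column T' c) = head 0 (column T c).
Proof. by move=> [_ Hc]; have [s -> _] := Hc c; case: (column T c). Qed.


Lemma stepS1 k x y z i j : i != 1 -> x != [::] -> y = [::] ->
  fill_step k [:: x; y; z] (i, S j) = [:: x; [:: i]; z].
Proof. by move=> /negbTE Hi /negbTE Hx ->; rewrite /fill_step Hi /= Hx. Qed.

Lemma stepS2 k x y z i j : i != 1 -> x != [::] -> y != [::] -> z = [::] ->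
  fill_step k [:: x; y; z] (i, S j) = [:: x; y; [:: i]].
Proof. by move=> /negbTE Hi /negbTE Hx /negbTE Hy ->; rewrite /fill_step Hi /= Hx Hy. Qed.

Definition Tmid (b l1 l2 : nat) : tableau :=
  if l2 <= b then [:: iota 1 l1.+1; iota (l1+2) l2.+1; [:: l1+l2+3]]
  else [:: iota 1 l1.+1 ++ iota (l1+b+3) (l2-b); iota (l1+2) b.+1; [:: l1+l2+3]].

Lemma fill_path3 a b c l1 l2 l3 : l1 <= a -> l1 + l2 <= a + b ->
  ext (l1+l2+4) (Tmid b l1 l2) (fill [:: a; b; c] (path3 l1 l2 l3)).
Proof.
move=> H1 H2.
rewrite /fill -/(F _ _ 1 _) -[path3 _ _ _]/(S 0 :: (nseq l1 W ++ S 1 :: (nseq l2 W ++ S 2 :: nseq l3 W))).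
rewrite F_cons F_cat.
rewrite -[fill_step _ _ (1, S 0)]/([:: iota 1 0.+1; [::]; [::]]) (@P1 a b c 0) // add0n size_nseq.
rewrite F_cons stepS1 //.
rewrite F_cat.
have -> : [:: 2 + l1] = iota (l1+2) 0.+1 by rewrite addnC.
rewrite /Tmid; case: leqP => Hb.
- rewrite (@P2a a b c l1 H1 0) ?size_nseq; try lia.
  rewrite F_cons stepS2 //.
  have -> : (2 + l1).+1 + l2 = l1 + l2 + 3 by lia.
  rewrite add0n; apply: ext_W => //; lia.
- rewrite [nseq l2 W](_ : _ = nseq b W ++ nseq (l2-b) W); last by rewrite -nseqD subnKC // ltnW.
  rewrite F_cat (@P2a a b c l1 H1 0) ?size_nseq; try lia.
  have E : F [:: a; b; c] [:: iota 1 l1.+1; iota (l1 + 2) (0 + b).+1; [::]] ((2 + l1).+1 + b)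
     (nseq (l2 - b) W) = [:: iota 1 l1.+1 ++ iota (l1+b+3) (l2-b); iota (l1 + 2) b.+1; [::]].
    have := @P2b a b c l1 H1 0 (l2 - b) ((2 + l1).+1 + b).
    by rewrite cats0 add0n; apply; lia.
  rewrite E F_cons stepS2 //.
  rewrite size_cat !size_nseq.

  have -> : (2 + l1).+1 + (b + (l2 - b)) = l1 + l2 + 3 by lia.
  apply: ext_W => //; lia.
Qed.

Lemma top_ranks3 T : size T = 3 ->
  top_ranks T = let A1 := (head 0 (column T 1)).-1 in
                let A2 := (head 0 (column T 2)).-1 in
                let r1 := nth 0 [:: 0] (col_of T A1) + pos_of T A1 in
                [:: 0; r1; nth 0 [:: 0; r1] (col_of T A2) + pos_of T A2].
Proof. by move=> H; rewrite /top_ranks H. Qed.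

Lemma top_ranks_ext n T0 T : ext n T0 T -> size T0 = 3 ->
  (forall i, 0 < i < 3 -> column T0 i != [::] /\
     ((head 0 (column T0 i)).-1 < n /\
      (head 0 (column T0 i)).-1 \in column T0 (col_of T0 (head 0 (column T0 i)).-1))) ->
  top_ranks T = top_ranks T0.
Proof.
move=> HE H3 Hc.
have HT : size T = 3 by case: HE => ->.
rewrite !top_ranks3 //; cbv zeta.
have [N1 [L1 M1]] := Hc 1 erefl.
have [N2 [L2 M2]] := Hc 2 erefl.
rewrite !(ext_head HE) //.
by rewrite !(ext_col_of HE) // !(ext_pos_of HE).
Qed.

Lemma col_of3 x y z A : col_of [:: x; y; z] A =
  if A \in x then 0 else if A \in y then 1 else if A \in z then 2 else 3.
Proof. by rewrite /col_of /=; case: (A \in x); case: (A \in y); case: (A \in z). Qed.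

Lemma index_iota m n i : i < n -> index (m + i) (iota m n) = i.
Proof.
move=> H; rewrite -(nth_iota 0 m H) index_uniq ?iota_uniq ?size_iota //.
Qed.

Lemma memb_iota x m n : (x \in iota m n) = (m <= x < m + n).
Proof. exact: mem_iota. Qed.

Lemma pos_of3 x y z A : pos_of [:: x; y; z] A =
  index A (nth [::] [:: x; y; z] (col_of [:: x; y; z] A)).
Proof. by []. Qed.

Lemma pos3_0 x y z A : A \in x -> pos_of [:: x; y; z] A = index A x.
Proof. by rewrite pos_of3 col_of3 => ->. Qed.
Lemma pos3_1 x y z A : A \in x = false -> A \in y -> pos_of [:: x; y; z] A = index A y.
Proof. by rewrite pos_of3 col_of3 => -> ->. Qed.

Lemma depth_path3 a b c l1 l2 l3 : l1 <= a -> l1 + l2 <= a + b ->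
  depth [:: a; b; c] (path3 l1 l2 l3) =
  if l2 <= b then l1 + (l1 + l2) else l1 + (l1 + l2 - b).
Proof.
move=> H1 H2; have HE := fill_path3 c l3 H1 H2.
rewrite /depth; move: HE; rewrite /Tmid; case: ifP => Hb HE.
- set x := iota 1 l1.+1 in HE; set y := iota (l1+2) l2.+1 in HE.
  have hy : head 0 y = l1 + 2 by [].
  have M1 : (l1 + 2).-1 \in x by rewrite /x memb_iota; lia.
  have M2 : (l1 + l2 + 3).-1 \in x = false by apply/negbTE; rewrite /x memb_iota; lia.
  have M3 : (l1 + l2 + 3).-1 \in y by rewrite /y memb_iota; lia.
  rewrite (top_ranks_ext HE) //; last first.
    case=> [|[|[|]]] //= _; rewrite /column /= ?hy ?M1 ?M2 ?M3 /=;
    (split; [by [] |split; [lia|]]) => //.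
  rewrite top_ranks3 //; cbv zeta; rewrite /column /= ?hy M1 M2 M3 /=.
  have I1 : index (l1 + 2).-1 x = l1.
    by rewrite /x (_ : (l1 + 2).-1 = 1 + l1) ?index_iota //; lia.
  have I2 : index (l1 + l2 + 3).-1 y = l2.
    by rewrite /y (_ : (l1 + l2 + 3).-1 = (l1 + 2) + l2) ?index_iota //; lia.
  rewrite (pos3_0 _ _ M1) (pos3_1 _ M2 M3) I1 I2; lia.
- set x := iota 1 l1.+1 ++ iota (l1+b+3) (l2-b) in HE; set y := iota (l1+2) b.+1 in HE.
  have hy : head 0 y = l1 + 2 by [].
  have M1 : (l1 + 2).-1 \in x by rewrite /x mem_cat memb_iota; apply/orP; left; lia.
  have M2 : (l1 + l2 + 3).-1 \in x by rewrite /x mem_cat !memb_iota; apply/orP; right; lia.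
  rewrite (top_ranks_ext HE) //; last first.
    case=> [|[|[|]]] //= _; rewrite /column /= ?hy ?M1 ?M2 /=;
    (split; [by [] |split; [lia|]]) => //.
  rewrite top_ranks3 //; cbv zeta; rewrite /column /= ?hy M1 M2 /=.
  have I1 : index (l1 + 2).-1 x = l1.
    rewrite /x (_ : (l1 + 2).-1 = 1 + l1); last by lia.
    by rewrite index_cat memb_iota (_ : (1 <= 1 + l1 < 1 + l1.+1)) ?index_iota //; lia.
  have I2 : index (l1 + l2 + 3).-1 x = l1 + (l2 - b).
    rewrite /x (_ : (l1 + l2 + 3).-1 = (l1 + b + 3) + (l2 - b).-1); last by lia.
    rewrite index_cat memb_iota (_ : (1 <= l1 + b + 3 + (l2 - b).-1 < 1 + l1.+1) = false).
      rewrite index_iota ?size_iota; lia.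
    by apply/negbTE; lia.
  rewrite (pos3_0 _ _ M1) (pos3_0 _ _ M2) I1 I2; lia.
Qed.

Section BB.
Import GRing.Theory.
Local Open Scope ring_scope.

Lemma foldl_nseqW k (r : int) n : foldl (rstep k) r (nseq n W) = r - n%:Z.
Proof. elim: n r => [|n IH] r /=; first by rewrite subr0. rewrite IH; lia. Qed.

Lemma ranks_nth k pi i : (i < size pi)%N ->
  nth 0 (start_ranks k pi) i = foldl (rstep k) 0 (take i pi).
Proof.
move=> H; rewrite /start_ranks nth_take //.
case: i H => [|i] H /=; first by rewrite take0.
by rewrite (nth_scanl _ _ (ltnW H)).
Qed.

Lemma size_ranks k pi : size (start_ranks k pi) = size pi.
Proof. by rewrite /start_ranks size_take /= size_scanl ltnSn. Qed.

Lemma ranks_prefix k pi x y : all (fun r : int => 0 <= r) (start_ranks k pi) ->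
  pi = x ++ y -> y != [::] -> 0 <= foldl (rstep k) 0 x.
Proof.
move=> /allP H E Hy.
have Hs : (size x < size pi)%N by rewrite E size_cat; move: Hy; case: (y) => //= ? ? _; lia.
have := H _ (mem_nth 0 (_ : (size x < size (start_ranks k pi))%N)).
by rewrite size_ranks ranks_nth // E take_size_cat //; apply; rewrite -E.
Qed.

Definition good k (r : int) p := forall i, (i < size p)%N -> 0 <= foldl (rstep k) r (take i p).

Lemma good_nil k r : good k r [::].
Proof. by []. Qed.

Lemma good_cons k r l p : 0 <= r -> good k (rstep k r l) p -> good k r (l :: p).
Proof. by move=> H0 H [|i] //= Hi; apply: H. Qed.

Lemma good_Wcat k (r : int) n p : n%:Z <= r -> good k (r - n%:Z) p -> good k r (nseq n W ++ p).
Proof.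
elim: n r => [|n IH] r Hn Hg /=; first by move: Hg; rewrite subr0.
apply: good_cons; first lia.
apply: IH => /=; first lia.
by move: Hg; rewrite (_ : r - 1 - n%:Z = r - n.+1%:Z) //; lia.
Qed.

Lemma good_ranks k pi : good k 0 pi -> all (fun r : int => 0 <= r) (start_ranks k pi).
Proof.
move=> H; apply/allP => r /(nthP 0) [i]; rewrite size_ranks => Hi <-.
by rewrite ranks_nth //; apply: H.
Qed.

Lemma pmap_nseqW n : pmap id (nseq n W) = [::].
Proof. by elim: n. Qed.

Lemma pmap_nil pi : pmap id pi = [::] -> pi = nseq (size pi) W.
Proof. by elim: pi => [|[y|] p IH] //= /IH {1}->. Qed.

Lemma pmap_cons pi x r : pmap id pi = x :: r ->
  exists n p', pi = nseq n W ++ S x :: p' /\ pmap id p' = r.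
Proof.
elim: pi => [|[y|] p IH] //=.
  by case=> -> <-; exists 0%N, p.
by case/IH => n [p' [-> <-]]; exists n.+1, p'.
Qed.

Lemma pm_S j p : pmap id (S j :: p) = j :: pmap id p.
Proof. by []. Qed.
Lemma pm_W n p : pmap id (nseq n W ++ p) = pmap id p.
Proof. by elim: n. Qed.
Lemma cnt_S j p : count (fun l => l == W) (S j :: p) = count (fun l => l == W) p.
Proof. by []. Qed.
Lemma cnt_W n p : count (fun l => l == W) (nseq n W ++ p) = (n + count (fun l => l == W) p)%N.
Proof. by elim: n => //= n ->. Qed.

Lemma path3E l1 l2 l3 : path3 l1 l2 l3 = S 0 :: nseq l1 W ++ S 1 :: nseq l2 W ++ S 2 :: nseq l3 W.
Proof. by []. Qed.

Lemma dyck_path3 a b c l1 l2 : (l1 <= a)%N -> (l1 + l2 <= a + b)%N ->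
  is_kDyck [:: a; b; c] (path3 l1 l2 (a + b + c - l1 - l2)).
Proof.
move=> H1 H2; apply/and3P; split.
- by rewrite /sletters path3E pm_S pm_W pm_S pm_W pm_S -[nseq _ W]cats0 pm_W.
- rewrite path3E cnt_S cnt_W cnt_S cnt_W cnt_S -[nseq _ W]cats0 cnt_W /=; apply/eqP; lia.
- apply: good_ranks; rewrite path3E; apply: good_cons => //=.
  apply: good_Wcat; first lia.
  apply: good_cons => /=; first lia.
  apply: good_Wcat; first lia.
  apply: good_cons => /=; first lia.
  rewrite -[nseq _ W]cats0; apply: good_Wcat; first lia.
  exact: good_nil.
Qed.

Lemma dyck_char a b c pi : is_kDyck [:: a; b; c] pi ->
  exists l1 l2, [/\ (l1 <= a)%N, (l1 + l2 <= a + b)%N & pi = path3 l1 l2 (a + b + c - l1 - l2)].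
Proof.
case/and3P => /eqP Hs /eqP Hc Hr.
move: Hs; rewrite /sletters /=.
case/pmap_cons => n0 [p1 [E0 /pmap_cons [n1 [p2 [E1 /pmap_cons [n2 [p3 [E2 /pmap_nil E3]]]]]]]].
rewrite E3 in E2; rewrite E2 in E1; rewrite E1 in E0; subst pi.
set n3 := size p3 in Hc *.
set k := [:: a; b; c] in Hr *.
have R0 : 0 <= foldl (rstep k) 0 (nseq n0 W).
  by apply: (ranks_prefix Hr (erefl _) (isT : S 0 :: _ != [::])).
have R1 : 0 <= foldl (rstep k) 0 (nseq n0 W ++ S 0 :: nseq n1 W).
  by apply: (ranks_prefix Hr _ (isT : S 1 :: _ != [::])); rewrite -catA.
have R2 : 0 <= foldl (rstep k) 0 (nseq n0 W ++ S 0 :: nseq n1 W ++ S 1 :: nseq n2 W).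
  by apply: (ranks_prefix Hr _ (isT : S 2 :: _ != [::])); rewrite -catA /= -catA.
rewrite !foldl_cat !foldl_nseqW /= !foldl_cat !foldl_nseqW /= in R0 R1 R2.
rewrite foldl_nseqW in R2.
move: Hc; rewrite cnt_W cnt_S cnt_W cnt_S cnt_W cnt_S -[nseq n3 W]cats0 cnt_W /= => Hc.
have E0 : n0 = 0%N by lia.
have E4 : n3 = (a + b + c - n1 - n2)%N by lia.
exists n1, n2; split; try lia.
by rewrite cats0 E0 E4 path3E.
Qed.

Fixpoint Ar k (r : int) (p : seq letter) : int :=
  match p with
  | [::] => 0
  | l :: p => (if l != W then r else 0) + Ar k (rstep k r l) p
  end.

Lemma Ar_gen k r pi :
  \sum_(p <- zip (take (size pi) (r :: scanl (rstep k) r pi)) pi | p.2 != W) p.1 = Ar k r pi.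
Proof.
elim: pi r => [|l p IH] r /=; first by rewrite big_nil.
rewrite big_cons /= -IH; case: (l != W) => //; by rewrite add0r.
Qed.

Lemma area_Ar k pi : area k pi = Ar k 0 pi.
Proof. exact: Ar_gen. Qed.

Lemma Ar_W k r n p : Ar k r (nseq n W ++ p) = Ar k (r - n%:Z) p.
Proof.
elim: n r => [|n IH] r /=; first by rewrite subr0.
by rewrite add0r IH; congr Ar; lia.
Qed.

Lemma area_path3 a b c l1 l2 l3 : area [:: a; b; c] (path3 l1 l2 l3) =
  (a%:Z - l1%:Z) + (a%:Z - l1%:Z + b%:Z - l2%:Z).
Proof.
rewrite area_Ar path3E /= Ar_W /= Ar_W /= -[nseq l3 W]cats0 Ar_W /=; lia.
Qed.

Lemma idx1 l1 l2 l3 : index (S 1) (path3 l1 l2 l3) = l1.+1.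
Proof. by rewrite path3E /= index_cat mem_nseq andbF /= size_nseq addn0. Qed.
Lemma idx2 l1 l2 l3 : index (S 2) (path3 l1 l2 l3) = (l1 + l2).+2.
Proof.
rewrite path3E /= index_cat mem_nseq andbF /= index_cat mem_nseq andbF /= !size_nseq; lia.
Qed.
Lemma ell1_path3 l1 l2 l3 : ell1 (path3 l1 l2 l3) = l1.
Proof. by rewrite /ell1 idx1. Qed.
Lemma ell2_path3 l1 l2 l3 : ell2 (path3 l1 l2 l3) = l2.
Proof. rewrite /ell2 idx1 idx2; lia. Qed.
End BB.

Unset Implicit Arguments.
Unset Strict Implicit.

Theorem proposition5p7 (a b c : nat) :
  0 < a -> 0 < b -> 0 < c ->
  (forall pi, is_kDyck [:: a; b; c] pi ->
     exists! l : nat * nat,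
       [/\ l.1 <= a, l.1 + l.2 <= a + b &
           pi = path3 l.1 l.2 (a + b + c - l.1 - l.2)]) /\
  (forall pi, is_kDyck [:: a; b; c] pi ->
     [/\ is_kDyck [:: a; b; c] (theta a b c pi),
         theta a b c (theta a b c pi) = pi,
         area [:: a; b; c] pi = Posz (depth [:: a; b; c] (theta a b c pi)) &
         Posz (depth [:: a; b; c] pi) = area [:: a; b; c] (theta a b c pi)]).
Proof.
move=> Ha Hb0 Hc0; split.
- move=> pi /dyck_char [l1 [l2 [H1 H2 ->]]].
  exists (l1, l2); split => // [[m1 m2]] [/= _ _ E].
  have := congr1 ell1 E; have := congr1 ell2 E.
  by rewrite !ell1_path3 !ell2_path3 => -> ->.
- move=> pi /dyck_char [l1 [l2 [H1 H2 ->]]].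
  rewrite /theta ell1_path3 ell2_path3; case: leqP => Hb.
  + have E : c + l1 + l2 = a + b + c - (a - l1) - (b - l2) by lia.
    rewrite E ell1_path3 ell2_path3 leq_subr.
    have D1 : a - l1 <= a by rewrite leq_subr.
    have D2 : a - l1 + (b - l2) <= a + b by lia.
    split.
    * exact: dyck_path3.
    * have -> : a - (a - l1) = l1 by lia.
      have -> : b - (b - l2) = l2 by lia.
      by have -> : c + (a - l1) + (b - l2) = a + b + c - l1 - l2 by lia.
    * rewrite area_path3 (depth_path3 _ _ D1 D2) leq_subr.
      lia.
    * rewrite area_path3 (depth_path3 _ _ H1 H2) Hb; lia.
  + have E : c + l1 = a + b + c - (a + b - l1 - l2) - l2 by lia.
    have Hb' : (l2 <= b) = false by apply/negbTE; rewrite -ltnNge.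
    rewrite ell1_path3 ell2_path3 Hb'.
    have D1 : a + b - l1 - l2 <= a by lia.
    have D2 : a + b - l1 - l2 + l2 <= a + b by lia.
    split.
    * rewrite E; exact: dyck_path3.
    * have -> : a + b - (a + b - l1 - l2) - l2 = l1 by lia.
      by have -> : c + (a + b - l1 - l2) = a + b + c - l1 - l2 by lia.
    * rewrite area_path3 (depth_path3 _ _ D1 D2) Hb'; lia.
    * rewrite area_path3 (depth_path3 _ _ H1 H2) Hb'; lia.
Qed.
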